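(* Let $X\subset\operatorname{Hol}(\mathbb{D})$ be a Banach space such that (X1) for each $w\in\mathbb{D}$ the map $f\mapsto f(w)$, $X\to\mathbb{C}$, is continuous; (X2) $X$ contains the polynomials and they are dense in $X$; (X3) if $f\in X$ then $zf\in X$. Let $Y\subset X$ be a set such that (Y1) if $g\in X$ and $0<\inf_{\mathbb{D}}|g|\le\sup_{\mathbb{D}}|g|<\infty$, then $g\in Y$; (Y2) for every $\lambda\in\mathbb{T}$, the function $g(z):=z-\lambda$ belongs to $Y$. Let $T:X\to\operatorname{Hol}(\mathbb{D})$ be a continuous linear map such that $(Tg)(z)\neq0$ for all $g\in Y$ and all $z\in\mathbb{D}$. Then there exist holomorphic functions $\phi:\mathbb{D}\to\mathbb{D}$ and $\psi:\mathbb{D}\to\mathbb{C}\setminus\{0\}$ such that \[ Tf=\psi\cdot(f\circ\phi)\qquad(f\in X). \]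
   Context: $\mathbb{D}$ is the open unit disk, $\mathbb{T}$ the unit circle, and $\operatorname{Hol}(\mathbb{D})$ the space of holomorphic functions on $\mathbb{D}$, endowed with its usual Fréchet-space topology (uniform convergence on compact subsets of $\mathbb{D}$); continuity of $T$ refers to the norm topology on $X$ and this topology on $\operatorname{Hol}(\mathbb{D})$. *)

(* Defs.v *)
From HB Require Import structures.
From mathcomp Require Import all_boot all_order all_algebra.
From mathcomp Require Import all_classical all_reals all_analysis.
From mathcomp Require Import complex.
Unset Printing Implicit Defensive.
Import Order.TTheory GRing.Theory Num.Theory.
Import numFieldNormedType.Exports.
Local Open Scope ring_scope.
Local Open Scope classical_set_scope.

(* The complex numbers C = R[i] over a real field R : realType, seen as a
   numClosedFieldType; MathComp-Analysis then equips it with its usual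
   (norm) topology and with its structure of normed C-vector space. *)
Definition CC (R : realType) : numClosedFieldType := Num.ClosedField.clone R[i] _.

Definition disk (R : realType) : set (CC R) := [set z | `|z| < 1].
Definition circle (R : realType) : set (CC R) := [set z | `|z| = 1].

(* f is holomorphic on D: complex-differentiable (derivative in direction 1,
   C viewed as a normed space over itself) at every point of D.  Elements of
   Hol(D) are represented by functions C -> C, only their values on D matter. *)
Definition holo_on_disk {R : realType} (f : CC R -> CC R) : Prop :=
  forall z, disk R z -> derivable f z 1.

(* Continuity of a map T : X -> Hol(D) at every point, where Hol(D) carries
   the topology of uniform convergence on compact subsets of D (a basic
   neighbourhood of h is {k | sup_K |k - h| < eps}, K compact in D). *)
Definition continuous_to_Hol {R : realType} {X : normedModType (CC R)}
    (T : X -> CC R -> CC R) : Prop :=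
  forall (f : X) (K : set (CC R)), compact K -> K `<=` disk R ->
  forall eps : CC R, 0 < eps -> exists2 delta : CC R, 0 < delta &
    forall g : X, `|g - f| < delta ->
      forall z, K z -> `|T g z - T f z| < eps.

(* Main.v *)
Require Import Defs.
From HB Require Import structures.
From mathcomp Require Import all_boot all_order all_algebra.
From mathcomp Require Import all_classical all_reals all_analysis.
From mathcomp Require Import complex.
From mathcomp Require Import ring lra zify.
Import Order.TTheory GRing.Theory Num.Theory.
Import numFieldNormedType.Exports.
Local Open Scope ring_scope.
Local Open Scope classical_set_scope.
Lemma rootbound (C : numClosedFieldType) (M : C) (n : nat) (F : {poly C}) :
  (size F <= n.+1)%N -> F`_0 = 1 -> 0 <= M ->
  (forall z, root F z -> 1 <= M * `|z|) ->
  `|F`_1 ^+ 2 - F`_2 *+ 2| <= n%:R * M ^+ 2.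
Proof.
elim: n F => [|n IH] F sF F0 M0 HR.
  have F1 : F`_1 = 0 by rewrite nth_default // (leq_trans sF).
  have F2 : F`_2 = 0 by rewrite nth_default // (leq_trans sF).
  by rewrite F1 F2 expr2 mul0r mul0rn subr0 normr0 mul0r.
case: (ltnP (size F) n.+2) => [lt|ge].
  apply: le_trans (IH F lt F0 M0 HR) _.
  by rewrite ler_wpM2r ?exprn_ge0 // ler_nat.
have sF2 : size F = n.+2 by apply/eqP; rewrite eqn_leq sF ge.
have : size F != 1%N by rewrite sF2.
move/closed_rootP => [z rz].
have z0 : z != 0.
  by apply/eqP => ez; move: rz; rewrite ez /root horner_coef0 F0 oner_eq0.
have /factor_theorem [G FG] := rz.
set t := z^-1.
have [H HG] : exists H, H = (- z) *: G by eexists.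
have G0 : G != 0 by apply/eqP => eG; move: sF2; rewrite FG eG mul0r size_poly0.
have sG : size G = n.+1.
  have := size_Mmonic G0 (monicXsubC z); rewrite -FG sF2 size_XsubC addn2 /=.
  by case.
have sH : size H = n.+1 by rewrite HG size_scale ?oppr_eq0.
have FH : F = H - t *: (H * 'X).
  rewrite FG HG -scalerAl scalerA /t mulrN mulVf // scaleN1r opprK mulrBr.
  by rewrite [G * z%:P]mulrC mul_polyC addrC scaleNr.
have H0 : H`_0 = 1 by move: F0; rewrite FH coefB coefZ coefMX /= mulr0 subr0.
have HR' : forall x, root H x -> 1 <= M * `|x|.
  move=> x rx; apply: HR; move: rx.
  rewrite /root FG hornerM HG hornerZ mulf_eq0 oppr_eq0 (negPf z0) /=.
  by move/eqP->; rewrite mul0r.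
have := IH H (eq_leq sH) H0 M0 HR'.
have -> : F`_1 = H`_1 - t by rewrite FH coefB coefZ coefMX /= H0 mulr1.
have -> : F`_2 = H`_2 - t * H`_1 by rewrite FH coefB coefZ coefMX.
have -> : (H`_1 - t) ^+ 2 - (H`_2 - t * H`_1) *+ 2 =
   (H`_1 ^+ 2 - H`_2 *+ 2) + t ^+ 2 by ring.
move=> IHH.
have tM : `|t| <= M.
  have := HR z rz => h.
  have : `|t| * 1 <= `|t| * (M * `|z|) by rewrite ler_wpM2l.
  by rewrite mulr1 mulrCA -normrM /t mulVf // normr1 mulr1.
apply: le_trans (ler_normD _ _) _.
rewrite -natr1 mulrDl mul1r lerD // normrX.
by rewrite !expr2 ler_pM.
Qed.
Lemma ReD (R : realType) (x y : R[i]) : complex.Re (x + y) = complex.Re x + complex.Re y.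
Proof. by case: x => ? ?; case: y. Qed.

Lemma archC (R : realType) (u K : CC R) : 0 <= u ->
  (forall N : nat, (0 < N)%N -> u *+ N <= K) -> u = 0.
Proof.
move=> u0 H; apply/eqP; apply: contraT => un0.
have : 0 < u by rewrite lt_def un0 u0.
rewrite ltcE => /andP [_ ReU].
have ReMn : forall N, complex.Re (u *+ N) = complex.Re u *+ N.
  elim=> [|N IHN]; first by [].
  by rewrite !mulrS ReD IHN.
have := H (Num.Def.trunc (complex.Re K / complex.Re u)).+1 isT.
rewrite lecE => /andP [_]; rewrite ReMn.
have := truncnS_gt (complex.Re K / complex.Re u).
rewrite ltr_pdivrMr // mulrC mulr_natr => h1 h2.
by have := lt_le_trans h1 h2; rewrite ltxx.
Qed.

Lemma polybound (C : numDomainType) (q : {poly C}) (z : C) : `|z| < 1 ->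
  `|q.[z]| <= 1 + \sum_(i < size q) `|q`_i|.
Proof.
move=> z1; rewrite horner_coef; apply: le_trans (ler_norm_sum _ _ _) _.
apply: ler_wpDl => //; apply: ler_sum => i _.
rewrite normrM normrX; rewrite -[X in _ <= X]mulr1 ler_wpM2l //.
by rewrite exprn_ile1 // ltW.
Qed.

Lemma bin2x2 (N : nat) : ('C(N.+1, 2) * 2 = N.+1 * N)%N.
Proof.
elim: N => [|N IH]; first by [].
rewrite binS bin1 mulnDl IH; lia.
Qed.

Section GKZ.
Variable (R : realType).
Local Notation C := (CC R).
Variable (Ln : {poly C} -> C).
Hypothesis Llin : forall a p q, Ln (a *: p + q) = a * Ln p + Ln q.
Hypothesis L1 : Ln 1 = 1.
Hypothesis LY : forall p : {poly C}, (exists m M : C, 0 < m /\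
  forall z : C, `|z| < 1 -> m <= `|p.[z]| <= M) -> Ln p != 0.

Lemma L0 : Ln 0 = 0.
Proof. by have := Llin (-1) 0 0; rewrite scaler0 addr0 mulN1r addNr. Qed.
Lemma LD p q : Ln (p + q) = Ln p + Ln q.
Proof. by have := Llin 1 p q; rewrite scale1r mul1r. Qed.
Lemma LZ a p : Ln (a *: p) = a * Ln p.
Proof. by have := Llin a p 0; rewrite !addr0 L0 addr0. Qed.
Lemma LMn p n : Ln (p *+ n) = Ln p *+ n.
Proof. by elim: n => [|n IH]; rewrite ?mulr0n ?L0 // !mulrS LD IH. Qed.
Lemma Lsum n (F : 'I_n -> {poly C}) : Ln (\sum_(i < n) F i) = \sum_(i < n) Ln (F i).
Proof. exact: (big_morph Ln LD L0). Qed.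

Lemma Lsq q : Ln (q ^+ 2) = Ln q ^+ 2.
Proof.
set M := 1 + \sum_(i < size q) `|q`_i|.
have M0 : 0 < M by rewrite ltr_wpDr ?sumr_ge0.
have qM : forall z, `|z| < 1 -> `|q.[z]| <= M by move=> z; apply: polybound.
set b := Ln (q ^+ 2); set a1 := Ln q.
have key : forall N, `|(a1 *+ N.+1) ^+ 2 - (b *+ 'C(N.+1, 2)) *+ 2| <= N.+1%:R * M ^+ 2.
  move=> N.
  pose F := \poly_(k < N.+2) (Ln (q ^+ k) *+ 'C(N.+1, k)).
  have F0 : F`_0 = 1 by rewrite coef_poly /= expr0 L1 bin0.
  have F1 : F`_1 = a1 *+ N.+1 by rewrite coef_poly /= expr1 bin1.
  have F2 : F`_2 = b *+ 'C(N.+1, 2).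
    rewrite coef_poly; case: ifP => // /negbT h.
    by rewrite bin_small ?mulr0n //; move: h; rewrite -leqNgt; lia.
  rewrite -F1 -F2; apply: rootbound; rewrite ?size_poly ?ltW //.
  move=> mu rmu.
  have FE : F.[mu] = Ln ((1 + mu *: q) ^+ N.+1).
    rewrite horner_poly exprDn Lsum; apply: eq_bigr => i _.
    by rewrite expr1n mul1r exprZn LMn LZ -mulrnAr mulrC.
  have muM0 : 0 <= M * `|mu| by rewrite mulr_ge0 // ltW.
  rewrite real_leNgt ?real1 ?ger0_real //; apply/negP => lt.
  move: rmu; rewrite /root FE; apply/negP; apply: LY.
  exists ((1 - `|mu| * M) ^+ N.+1), ((1 + `|mu| * M) ^+ N.+1).
  have lt' : `|mu| * M < 1 by rewrite mulrC.
  split; first by rewrite exprn_gt0 // subr_gt0.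
  move=> z z1; rewrite !hornerE normrX.
  have qz := qM z z1.
  apply/andP; split; apply: lerXn2r; rewrite ?nnegrE ?subr_ge0 //.
  - exact: ltW.
  - apply: le_trans (lerB_normD _ _); rewrite normr1 normrM lerD2l lerN2.
    by rewrite ler_wpM2l.
  - by rewrite addr_ge0 // mulr_ge0 // ltW.
  - apply: le_trans (ler_normD _ _) _; rewrite normr1 normrM lerD2l.
    by rewrite ler_wpM2l.
apply/eqP; rewrite eq_sym -subr_eq0; apply/eqP/normr0_eq0.
apply: (@archC R (`|a1 ^+ 2 - b|) (M ^+ 2 + `|b|)) => // -[//|N] _.
have := key N.
have -> : (a1 *+ N.+1) ^+ 2 - (b *+ 'C(N.+1, 2)) *+ 2 =
    N.+1%:R * (N.+1%:R * (a1 ^+ 2 - b) + b).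
  rewrite -mulrnA bin2x2 -[a1 *+ _]mulr_natr -[b *+ _]mulr_natr natrM.
  rewrite -!natr1; ring.
rewrite normrM normr_nat ler_pM2l ?ltr0Sn // => h.
rewrite -normrMn -mulr_natl.
set x := _ * _ in h *.
have -> : x = (x + b) - b by rewrite addrK.
apply: le_trans (ler_normB _ _) _.
by rewrite lerD2r.
Qed.

Lemma LM p q : Ln (p * q) = Ln p * Ln q.
Proof.
have := Lsq (p + q); rewrite sqrrD !LD => h.
have e : (Ln (p * q) - Ln p * Ln q) *+ 2 =
  (Ln (p ^+ 2) + (Ln (p * q) + Ln (p * q)) + Ln (q ^+ 2)) - (Ln p + Ln q) ^+ 2.
  by rewrite !Lsq; ring.
move: e; rewrite h subrr -(mul0rn _ 2) => /eqP; rewrite eqrMn2r /= subr_eq0.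
by move/eqP.
Qed.

Lemma Lhom p : Ln p = p.[Ln 'X].
Proof.
elim/poly_ind: p => [|p c IH]; first by rewrite L0 horner0.
by rewrite hornerMXaddC LD LM IH -alg_polyC LZ L1 mulr1.
Qed.

Lemma gkz (LY2 : forall l : C, `|l| = 1 -> Ln ('X - l%:P) != 0) :
  `|Ln 'X| < 1 /\ forall p, Ln p = p.[Ln 'X].
Proof.
split; last exact: Lhom.
set a := Ln 'X.
have La : Ln ('X - a%:P) = 0 by rewrite Lhom hornerXsubC subrr.
rewrite real_ltNge ?real1 ?ger0_real //; apply/negP.
rewrite le_eqVlt => /orP [/eqP e|lt].
  by move: (LY2 a (esym e)); rewrite La eqxx.
have : Ln ('X - a%:P) != 0.
  apply: LY; exists (`|a| - 1), (1 + `|a|); split; first by rewrite subr_gt0.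
  move=> z z1; rewrite hornerXsubC; apply/andP; split.
    rewrite distrC; apply: le_trans (lerB_dist a z).
    by rewrite lerD2l lerN2 ltW.
  by apply: le_trans (ler_normB _ _) _; rewrite lerD2r ltW.
by rewrite La eqxx.
Qed.
End GKZ.

Lemma zero_lemma (C : numFieldType) (x K : C) : 0 < K ->
  (forall e, 0 < e -> `|x| < e * K) -> x = 0.
Proof.
move=> K0 h; apply/normr0_eq0/eqP; apply: contraT => nx.
have xp : 0 < `|x| by rewrite lt_def nx normr_ge0.
by have := h (`|x| / K) (divr_gt0 xp K0); rewrite divfK ?gt_eqF // ltxx.
Qed.

Theorem corollary7p2 (R : realType)
  (* X is a Banach space over C which is (linearly, injectively) a subspace
     of Hol(D): x : X is the holomorphic function emb x *)
  (X : completeNormedModType (CC R)) (emb : X -> CC R -> CC R)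
  (emb_holo : forall x : X, holo_on_disk (emb x))
  (emb_lin : forall (a : CC R) (x y : X) (z : CC R), disk R z ->
     emb (a *: x + y) z = a * emb x z + emb y z)
  (emb_inj : forall x y : X,
     (forall z, disk R z -> emb x z = emb y z) -> x = y)
  (* (X1) point evaluations are continuous on X *)
  (X1 : forall w : CC R, disk R w -> continuous (fun x : X => emb x w))
  (* (X2) X contains the polynomials, and they are dense in X *)
  (X2a : forall p : {poly CC R}, exists x : X,
     forall z, disk R z -> emb x z = p.[z])
  (X2b : closure [set x : X | exists p : {poly CC R},
     forall z, disk R z -> emb x z = p.[z]] = setT)
  (* (X3) f in X implies z f in X *)
  (X3 : forall x : X, exists y : X,
     forall z, disk R z -> emb y z = z * emb x z)
  (Y : set X)
  (* (Y1) 0 < inf_D |g| <= sup_D |g| < oo implies g in Y *)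
  (Y1 : forall g : X,
     (exists m M : CC R, 0 < m /\
        forall z, disk R z -> m <= `|emb g z| <= M) -> Y g)
  (* (Y2) z - lambda belongs to Y for every lambda in T *)
  (Y2 : forall lambda : CC R, circle R lambda -> forall g : X,
     (forall z, disk R z -> emb g z = z - lambda) -> Y g)
  (* T : X -> Hol(D) continuous linear, Tg zero-free on D for g in Y *)
  (T : X -> CC R -> CC R)
  (T_holo : forall x : X, holo_on_disk (T x))
  (T_lin : forall (a : CC R) (x y : X) (z : CC R), disk R z ->
     T (a *: x + y) z = a * T x z + T y z)
  (T_cont : continuous_to_Hol T)
  (T_nonvanish : forall g : X, Y g -> forall z, disk R z -> T g z != 0) :
  exists phi psi : CC R -> CC R,
    [/\ holo_on_disk phi, (forall z, disk R z -> disk R (phi z)),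
        holo_on_disk psi, (forall z, disk R z -> psi z != 0) &
        forall (f : X) (z : CC R), disk R z -> T f z = psi z * emb f (phi z)].

Proof.
have [xp hxp] := boolp.choice X2a.
have xplin : forall a p q, xp (a *: p + q) = a *: xp p + xp q.
  move=> a p q; apply: emb_inj => z zD.
  by rewrite emb_lin // !hxp // hornerD hornerZ.
have c_nz : forall w, disk R w -> T (xp 1) w != 0.
  move=> w wD; apply: T_nonvanish wD; apply: Y1; exists 1, 1; split => // z zD.
  by rewrite hxp // -polyC1 hornerC normr1 lexx.
have key : forall w, disk R w ->
    `|T (xp 'X) w / T (xp 1) w| < 1 /\
    forall p, T (xp p) w / T (xp 1) w = p.[T (xp 'X) w / T (xp 1) w].
  move=> w wD.
  apply: (@gkz R (fun p => T (xp p) w / T (xp 1) w)).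
  - by move=> a p q; rewrite xplin T_lin // mulrDl mulrA.
  - by rewrite divff // c_nz.
  - move=> p [m [M [m0 hm]]]; rewrite mulf_neq0 ?invr_eq0 ?c_nz //.
    apply: T_nonvanish wD; apply: Y1; exists m, M; split => // z zD.
    by rewrite hxp //; apply: hm.
  - move=> l l1; rewrite mulf_neq0 ?invr_eq0 ?c_nz //.
    apply: T_nonvanish wD; apply: (Y2 l l1) => z zD.
    by rewrite hxp // hornerXsubC.
have ext : forall f w, disk R w ->
    T f w = T (xp 1) w * emb f (T (xp 'X) w / T (xp 1) w).
  move=> f w wD.
  set c := T (xp 1) w; set a := T (xp 'X) w / c.
  have [ha hom] := key w wD; rewrite -/c -/a in ha hom.
  apply/eqP; rewrite -subr_eq0; apply/eqP.
  apply: (@zero_lemma _ _ (1 + `|c|)); first by rewrite ltr_wpDr.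
  move=> e e0.
  have Ksub : [set w] `<=` disk R by move=> z ->.
  have Kc : compact [set w] by exact: compact_set1.
  have [delta d0 hd] := T_cont f [set w] Kc Ksub e e0.
  have h1 := @near_ball _ _ f delta d0.
  have h2 := X1 a ha f.
  have h3 : \forall g \near f, `|emb f a - emb g a| < e.
    by move/cvgrPdist_lt: h2; apply.
  have nbB : nbhs f [set g | `|f - g| < delta /\ `|emb f a - emb g a| < e].
    apply: filterS (filterI h1 h3) => g [].
    by rewrite -ball_normE.
  have : closure [set x : X | exists p : {poly CC R},
     forall z, disk R z -> emb x z = p.[z]] f by rewrite X2b.
  move=> /(_ _ nbB) [x [[p hp] [hx1 hx2]]].
  have xE : x = xp p.
    apply: emb_inj => z zD; exact: (etrans (hp z zD) (esym (hxp p z zD))).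
  have Tx : T x w = c * emb x a.
    by rewrite (hp a ha) -hom xE mulrC divfK //; apply: c_nz.
  have -> : T f w - c * emb f a = (T f w - T x w) + c * (emb x a - emb f a).
    by rewrite Tx mulrBr addrA subrK.
  apply: le_lt_trans (ler_normD _ _) _.
  rewrite [e * _]mulrDr mulr1 normrM.
  apply: ltr_leD.
    by rewrite distrC; apply: hd; rewrite // distrC.
  by rewrite mulrC ler_wpM2r // distrC ltW.
exists (fun z => T (xp 'X) z / T (xp 1) z), (T (xp 1)).
split.
- move=> w wD.
  exact: (derivableM (T_holo (xp 'X) w wD)
            (derivableV (c_nz w wD) (T_holo (xp 1) w wD))).
- by move=> z zD; have [] := key z zD.
- exact: T_holo.
- exact: c_nz.
- by move=> f z zD; apply: ext.
Unshelve. all: by end_near.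
Qed.
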